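(* Let $r=[r_0,\ldots,r_m]$ and $c=[c_0,\ldots,c_n]$ be selections of rows and columns of the Pascal upper triangular matrix $T$, and let $\{\hat r,\hat c\}$ be an ordered sub-pair of $\{r,c\}$ of length $p+1$, with strictly increasing index sequences $\alpha=[\alpha_0,\ldots,\alpha_p]\subseteq\{0,\ldots,m\}$ and $\beta=[\beta_0,\ldots,\beta_p]\subseteq\{0,\ldots,n\}$ such that $\hat r_i=r_{\alpha_i}$ and $\hat c_i=c_{\beta_i}$. Let $I_{\hat r,\hat c}$ be the $(m+1)\times(n+1)$ matrix (rows and columns indexed from $0$) with entry $1$ at positions $(\alpha_i,\beta_i)$ for $i=0,\ldots,p$ and all other entries $0$. Then $\operatorname{rank}(T_{\hat r,\hat c})=\operatorname{rank}(I_{\hat r,\hat c})=p+1$. If moreover $\{\hat r,\hat c\}$ is maximal, then $\operatorname{rank}(T_{r,c})=\operatorname{rank}(I_{\hat r,\hat c})$.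
   Context: The Pascal upper triangular matrix is the infinite matrix $T=(T_{i,j})_{i,j\ge 0}$ with $T_{i,j}=\binom{j}{i}$, where $\binom{j}{i}:=0$ if $i>j$ (rows and columns indexed from $0$). A selection of rows (resp. columns) is a strictly increasing finite sequence of nonnegative integers. For selections $r=[r_0,\ldots,r_m]$ and $c=[c_0,\ldots,c_n]$, $T_{r,c}$ denotes the $(m+1)\times(n+1)$ matrix whose $(i,j)$ entry is $\binom{c_j}{r_i}$. A pair $\{\hat r,\hat c\}$ is an ordered sub-pair of $\{r,c\}$ of length $p+1$ if $\hat r=[\hat r_0,\ldots,\hat r_p]$ is a subsequence of $r$, $\hat c=[\hat c_0,\ldots,\hat c_p]$ is a subsequence of $c$, and $\hat r_i\le \hat c_i$ for all $i=0,\ldots,p$ (the empty pair has length $0$). It is maximal if no ordered sub-pair of $\{r,c\}$ has length greater than $p+1$. *)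

(* Defs.v *)
From HB Require Import structures.
From mathcomp Require Import all_boot all_order all_algebra.
Set Implicit Arguments. Unset Strict Implicit. Unset Printing Implicit Defensive.
Import GRing.Theory.

Definition strict_incr_nat (k : nat) (s : 'I_k -> nat) : Prop :=
  forall i j : 'I_k, (i < j)%N -> (s i < s j)%N.

Definition strict_incr_ord (k l : nat) (a : 'I_k -> 'I_l) : Prop :=
  forall i j : 'I_k, (i < j)%N -> (a i < a j)%N.

Definition pascal_sub (a b : nat) (r : 'I_a -> nat) (c : 'I_b -> nat)
  : 'M[rat]_(a, b) :=
  \matrix_(i < a, j < b) (('C(c j, r i))%:R)%R.

Definition ordered_subpair (m n k : nat) (r : 'I_m -> nat) (c : 'I_n -> nat)
  (alpha : 'I_k -> 'I_m) (beta : 'I_k -> 'I_n) : Prop :=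
  strict_incr_ord alpha /\ strict_incr_ord beta /\
  (forall i : 'I_k, (r (alpha i) <= c (beta i))%N).

Definition maximal_subpair (m n k : nat) (r : 'I_m -> nat) (c : 'I_n -> nat)
  (alpha : 'I_k -> 'I_m) (beta : 'I_k -> 'I_n) : Prop :=
  ordered_subpair r c alpha beta /\
  forall (q : nat) (alpha' : 'I_q -> 'I_m) (beta' : 'I_q -> 'I_n),
    ordered_subpair r c alpha' beta' -> (q <= k)%N.

Definition subpair_indicator (m n k : nat)
  (alpha : 'I_k -> 'I_m) (beta : 'I_k -> 'I_n) : 'M[rat]_(m, n) :=
  \matrix_(i < m, j < n)
    (if [exists t : 'I_k, (alpha t == i) && (beta t == j)] then 1%R else 0%R).

(* Main.v *)
Require Import Defs.
From HB Require Import structures.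
From mathcomp Require Import all_boot all_order all_algebra zify.
From mathcomp Require Import perm.
Set Implicit Arguments. Unset Strict Implicit. Unset Printing Implicit Defensive.
Import Order.TTheory GRing.Theory Num.Theory.
Import Order.TTheory GRing.Theory Num.Theory.
Lemma countX (s : seq nat) k : sorted ltn s -> (k < size s)%N ->
  count (fun v => v <= nth 0 s k) s = k.+1.
Proof.
elim: s k => [|x s IH] k //= Hs Hk.
have Hall := order_path_min ltn_trans Hs.
have Hs' := path_sorted Hs.
case: k Hk => [|k] Hk /=.
  rewrite leqnn add1n; congr _.+1; apply/eqP; rewrite -leqn0 leqNgt -has_count.
  by apply/hasPn => v /(allP Hall); rewrite -ltnNge.
have Hmem : nth 0 s k \in s by rewrite mem_nth.
have := allP Hall _ Hmem => /= Hx.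
by rewrite (ltnW Hx) add1n IH.
Qed.

Lemma countY (s : seq nat) (Q : pred nat) k : sorted ltn s ->
  (forall v w, w <= v -> Q v -> Q w) -> k < count Q s -> Q (nth 0 s k).
Proof.
elim: s k => [|x s IH] k //= Hs HQ.
have Hall := order_path_min ltn_trans Hs.
have Hs' := path_sorted Hs.
case: (boolP (Q x)) => Qx /=.
  case: k => [|k] //=; rewrite add1n ltnS; exact: IH.
rewrite add0n (_ : count Q s = 0) //.
apply/eqP; rewrite -leqn0 leqNgt -has_count; apply/hasPn => v Hv.
by apply: contra Qx => Qv; apply: HQ Qv; apply: ltnW (allP Hall _ Hv).
Qed.

Lemma strict_le' n (a : 'I_n -> nat) (i j : 'I_n) : strict_incr_nat a -> (i <= j)%N -> (a i <= a j)%N.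
Proof.
move=> Ha; rewrite leq_eqVlt => /orP [/eqP Hij | Hij]; last exact: ltnW (Ha _ _ Hij).
by rewrite (val_inj Hij).
Qed.

Lemma sort_props M s (F : 'I_s -> 'I_M) : injective F ->
  let sF := sort leq [seq val (F i) | i <- enum 'I_s] in
  [/\ size sF = s, sorted ltn sF & forall v, v \in sF -> v < M].
Proof.
move=> Finj sF; split.
- by rewrite size_sort size_map size_enum_ord.
- rewrite ltn_sorted_uniq_leq sort_uniq sort_sorted ?andbT; last exact: leq_total.
  rewrite map_inj_uniq ?enum_uniq // => i j /val_inj; exact: Finj.
- by move=> v; rewrite /sF mem_sort; case/mapP => i _ ->; exact: ltn_ord.
Qed.

Lemma sort_match M N s (r : 'I_M.+1 -> nat) (c : 'I_N.+1 -> nat)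
  (F : 'I_s -> 'I_M.+1) (G : 'I_s -> 'I_N.+1) :
  strict_incr_nat r -> strict_incr_nat c -> injective F -> injective G ->
  (forall i, r (F i) <= c (G i)) ->
  exists (a : 'I_s -> 'I_M.+1) (b : 'I_s -> 'I_N.+1), ordered_subpair r c a b.
Proof.
move=> Hr Hc Finj Ginj Hrc.
have [szF stF inF] := sort_props Finj.
have [szG stG inG] := sort_props Ginj.
set sF := sort leq _ in szF stF inF.
set sG := sort leq _ in szG stG inG.
exists (fun k => inord (nth 0 sF k)), (fun k => inord (nth 0 sG k)).
split; [|split].
- move=> i j Hij; rewrite !inordK; last 2 first.
    by rewrite ltnS -ltnS; apply: inF; rewrite mem_nth // szF.
    by rewrite ltnS -ltnS; apply: inF; rewrite mem_nth // szF.
  by apply: (sorted_ltn_nth ltn_trans) => //; rewrite inE szF.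
- move=> i j Hij; rewrite !inordK; last 2 first.
    by rewrite ltnS -ltnS; apply: inG; rewrite mem_nth // szG.
    by rewrite ltnS -ltnS; apply: inG; rewrite mem_nth // szG.
  by apply: (sorted_ltn_nth ltn_trans) => //; rewrite inE szG.
- move=> k; set y := nth 0 sG k.
  have Hy : y < N.+1 by apply: inG; rewrite mem_nth // szG.
  set Q := fun v => (v < M.+1) && (r (inord v) <= c (inord y)).
  have HQ : forall v w, w <= v -> Q v -> Q w.
    move=> v w Hwv /andP [Hv Hrv]; apply/andP; split; first exact: leq_ltn_trans Hv.
    apply: leq_trans Hrv; apply: strict_le' Hr _; rewrite !inordK //; exact: leq_ltn_trans Hv.
  have Hcnt : count (fun v => v <= y) sG = k.+1 := countX stG (eq_ind_r (fun z => k < z) (ltn_ord k) szG).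
  have : k < count Q sF.
    have PF : perm_eq sF [seq val (F i) | i <- enum 'I_s] by rewrite /sF perm_sort perm_refl.
    have PG : perm_eq sG [seq val (G i) | i <- enum 'I_s] by rewrite /sG perm_sort perm_refl.
    rewrite -Hcnt (seq.permP PF) (seq.permP PG).
    rewrite !count_map; apply: sub_count => i /= Hi; apply/andP; split => //.
    rewrite inord_val; apply: leq_trans (Hrc i) _; apply: strict_le' Hc _.
    by rewrite inordK.
  move=> /(countY stF HQ) /andP [_].
  done.
Qed.
Local Open Scope ring_scope.

Definition PM n (a b : 'I_n -> nat) : 'M[rat]_n :=
  \matrix_(i, j) (('C(b i, a j))%:R)%R.
Definition GM n (a u w : 'I_n -> nat) : 'M[rat]_n :=
  \matrix_(i, j) (\sum_(u i <= t < w i) ('C(t, a j))%:R)%R.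

Definition Pprop n := forall a b : 'I_n -> nat, strict_incr_nat a -> strict_incr_nat b ->
  (0 <= \det (PM a b))%R /\ ((forall i, a i <= b i)%N -> (0 < \det (PM a b))%R).

Definition upd n (f : 'I_n -> nat) i0 v := fun i => if i == i0 then v else f i.

Lemma Q_of_P n : Pprop n -> forall d (a u w : 'I_n -> nat),
  (\sum_i (w i - u i) <= d)%N -> strict_incr_nat a -> (forall i, u i < w i)%N ->
  (forall i j : 'I_n, i < j -> w i <= u j)%N ->
  (0 <= \det (GM a u w))%R /\ ((forall i, a i < w i)%N -> (0 < \det (GM a u w))%R).
Proof.
move=> HP; elim=> [|d IH] a u w Hd Ha Huw Hwu.
- case: n HP a u w Hd Ha Huw Hwu => [|n] HP a u w Hd Ha Huw Hwu.
    by rewrite det_mx00; split => // _; exact: ltr01.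
  have := Huw ord0; have := Hd; rewrite (bigD1 ord0) //=.
  by rewrite -subn_gt0; case: (w ord0 - u ord0)%N.
- case: (boolP [forall i, w i == (u i).+1]) => [/forallP Hall | /forallPn [i0 Hi0]].
    have -> : GM a u w = PM a u.
      apply/matrixP => i j; rewrite !mxE (eqP (Hall i)) big_nat1 //.
    have Hu : strict_incr_nat u.
      move=> i j Hij; exact: leq_trans (Huw i) (Hwu i j Hij).
    have [H1 H2] := HP a u Ha Hu; split => // Hc; apply: H2 => i.
    by have := Hc i; rewrite (eqP (Hall i)) ltnS.
  have Hlt : ((u i0).+1 < w i0)%N.
    by have := Huw i0; rewrite leq_eqVlt eq_sym (negbTE Hi0).
  set w' := upd w i0 (w i0).-1.
  set u' := upd u i0 (w i0).-1.
  have Hw0 : (w i0).-1.+1 = w i0 by rewrite prednK // (leq_trans _ Hlt).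
  have Hdet : \det (GM a u w) = (1 * \det (GM a u w') + 1 * \det (GM a u' w))%R.
    apply: (determinant_multilinear (i0:=i0)).
    - apply/rowP => j; rewrite !mxE !mul1r /w' /u' /upd !eqxx.
      rewrite -{1}Hw0 big_nat_recr /=; last by rewrite -ltnS Hw0 ltnW.
      congr (_ + _); rewrite -[in RHS]Hw0 big_nat1 // ; idtac.
    - apply/matrixP => i j; rewrite !mxE /w' /upd.
      by rewrite ifN_eq // eq_sym neq_lift.
    - apply/matrixP => i j; rewrite !mxE /u' /upd.
      by rewrite ifN_eq // eq_sym neq_lift.
  have Hsum : forall (w1 u1 : 'I_n -> nat), (w1 i0 - u1 i0 < w i0 - u i0)%N ->
      (forall i, i != i0 -> w1 i - u1 i = w i - u i)%N ->
      (\sum_i (w1 i - u1 i) <= d)%N.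
    move=> w1 u1 H0 H1; rewrite -ltnS (leq_trans _ Hd) //.
    rewrite (bigD1 i0) //= [X in (_ < X)%N](bigD1 i0) //=.
    rewrite (eq_bigr (fun i => w i - u i)%N); last by move=> i /H1.
    by rewrite -addSn leq_add2r.
  have HA := IH a u w'; have HB := IH a u' w.
  have [A1 A2] : (0 <= \det (GM a u w'))%R /\ True.
    split => //; apply: (proj1 (HA _ Ha _ _)).
    - apply: Hsum; first by rewrite /w' /upd eqxx; rewrite ltn_sub2r // -Hw0.
      by move=> i Hi; rewrite /w' /upd (negbTE Hi).
    - move=> i; rewrite /w' /upd; case: eqP => [->|_]; [by rewrite -ltnS Hw0 | exact: Huw].
    - move=> i j Hij; rewrite /w' /upd; case: eqP => [Hi|_]; last exact: Hwu.
      subst i.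
      exact: leq_trans (leq_pred _) (Hwu _ _ Hij).
  have HB' := HB _ Ha _ _.
  have [B1 B2] : (0 <= \det (GM a u' w))%R /\ ((forall i, a i < w i)%N -> (0 < \det (GM a u' w))%R).
    apply: HB'.
    - apply: Hsum; first by rewrite /u' /upd eqxx; lia.
      by move=> i Hi; rewrite /u' /upd (negbTE Hi).
    - move=> i; rewrite /u' /upd; case: eqP => [->|_]; [lia | exact: Huw].
    - move=> i j Hij; rewrite /u' /upd; case: eqP => [Hj|_]; last exact: Hwu.
      subst j; have := Hwu _ _ Hij; have := Huw i0; lia.
  rewrite Hdet !mul1r; split; first exact: addr_ge0.
  by move=> Hc; rewrite ltr_wpDl // B2.
Qed.

Lemma tele (x y A : nat) : (x <= y)%N ->
  ('C(y, A.+1))%:R - ('C(x, A.+1))%:R = \sum_(x <= t < y) ('C(t, A))%:R :> rat.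
Proof.
move=> /subnKC <-; elim: (y - x)%N => [|d IH].
  by rewrite addn0 big_geq // subrr.
rewrite addnS big_nat_recr /=; last by rewrite leq_addr.
by rewrite binS natrD -IH addrAC.
Qed.

Lemma strict_le n (a : 'I_n -> nat) (i j : 'I_n) : strict_incr_nat a -> (i <= j)%N -> (a i <= a j)%N.
Proof.
move=> Ha; rewrite leq_eqVlt => /orP [/eqP Hij | Hij]; last exact: ltnW (Ha _ _ Hij).
by rewrite (val_inj Hij).
Qed.

Lemma P_all n : Pprop n.
Proof.
elim: n => [|n IHn].
  by move=> a b _ _; rewrite det_mx00; split => // _; exact: ltr01.
have HQ := Q_of_P IHn.
suff H : forall k (a b : 'I_n.+1 -> nat), a ord0 = k -> strict_incr_nat a -> strict_incr_nat b ->
  (0 <= \det (PM a b))%R /\ ((forall i, a i <= b i)%N -> (0 < \det (PM a b))%R).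
  by move=> a b; exact: H.
elim=> [|k IHk] a b Ha0 Ha Hb.
- set X := PM a b.
  set S : 'M[rat]_n.+1 := \matrix_(i, j) ((val i == (val j).+1)%:R).
  have HE : \det (1%:M - S) = 1.
    rewrite det_trig; last first.
      apply/is_trig_mxP => i j Hij; rewrite !mxE.
      rewrite (_ : (i == j) = false); last by apply/negbTE; apply/eqP => E; rewrite E ltnn in Hij.
      rewrite (_ : (val i == (val j).+1) = false); last by apply/negbTE/eqP => E; have : (val i < val j)%N := Hij; lia.
      by rewrite subr0.
    by rewrite big1 // => i _; rewrite !mxE eqxx (_ : (val i == (val i).+1) = false) ?subr0 //; lia.
  set R := (1%:M - S) *m X.
  have HR : \det X = \det R by rewrite det_mulmx HE mul1r.
  have R0 : forall j, R ord0 j = X ord0 j.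
    move=> j; rewrite /R mulmxBl mul1mx !mxE big1 ?subr0 // => k _; rewrite !mxE /= mul0r //.
  have RS : forall i j, R (lift ord0 i) j = X (lift ord0 i) j - X (widen_ord (leqnSn n) i) j.
    move=> i j; rewrite /R mulmxBl mul1mx !mxE (bigD1 (widen_ord (leqnSn n) i)) //= !mxE.
    rewrite (_ : _ == _ = true) ?mul1r; last by apply/eqP; exact: lift0.
    rewrite big1 ?addr0 // => k Hk; rewrite !mxE.
    rewrite (_ : (_ == _) = false) ?mul0r //; apply/negbTE; apply: contra Hk => /eqP E.
    apply/eqP/val_inj; move: E; rewrite /= /bump add1n; case. done.
  rewrite /X HR (expand_det_col _ ord0) big_ord_recl big1 ?addr0; last first.
    by move=> i _; rewrite RS !mxE Ha0 !bin0 subrr mul0r.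
  rewrite R0 !mxE Ha0 bin0 mul1r /cofactor /= expr0 mul1r.
  set a' := fun j : 'I_n => (a (lift ord0 j)).-1.
  set u := fun i : 'I_n => b (widen_ord (leqnSn n) i).
  set w := fun i : 'I_n => b (lift ord0 i).
  have Hapos : forall j : 'I_n, (0 < a (lift ord0 j))%N.
    by move=> j; rewrite -Ha0; apply: Ha; rewrite /= /bump /=.
  have -> : row' ord0 (col' ord0 R) = GM a' u w.
    apply/matrixP => i j; transitivity (R (lift ord0 i) (lift ord0 j)); first by rewrite !mxE.
    rewrite RS !mxE.
    rewrite -[a (lift ord0 j)](prednK (Hapos j)) tele //.
    apply: strict_le Hb _; rewrite /= /bump /=; lia.
  have Huw : forall i, (u i < w i)%N by move=> i; apply: Hb; rewrite /= /bump /=; lia.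
  have Ha' : strict_incr_nat a'.
    move=> i j Hij; rewrite /a'.
    have := Ha (lift ord0 i) (lift ord0 j); rewrite /= /bump /= !add1n ltnS => /(_ Hij).
    have := Hapos i; lia.
  have Hwu : forall i j : 'I_n, (i < j)%N -> (w i <= u j)%N.
    move=> i j Hij; apply: strict_le Hb _; rewrite /= /bump /=; lia.
  have [H1 H2] := HQ _ a' u w (leqnn _) Ha' Huw Hwu.
  split => // Hc; apply: H2 => i; rewrite /a' /w.
  have := Hc (lift ord0 i); have := Hapos i; lia.
- have Hapos : forall j, (0 < a j)%N.
    by move=> j; apply: leq_trans _ (strict_le (i:=ord0) Ha (leq0n j)); rewrite Ha0.
  case: (posnP (b ord0)) => Hb0.
    have -> : \det (PM a b) = 0.
      rewrite (expand_det_row _ ord0) big1 // => j _; rewrite !mxE Hb0 bin0n.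
      by rewrite (_ : (a j == 0) = false) ?mul0r //; have := Hapos j; case: (a j).
    split => // Hc; have := Hc ord0; rewrite Hb0 Ha0.
    by [].
  have Hbpos : forall i, (0 < b i)%N.
    by move=> i; apply: leq_trans _ (strict_le (i:=ord0) Hb (leq0n i)); exact: Hb0.
  set a' := fun j => (a j).-1.
  set b' := fun i => (b i).-1.
  have -> : PM a b = diag_mx (\row_i ((b i)%:R : rat)) *m PM a' b' *m diag_mx (\row_j ((a j)%:R)^-1).
    apply/matrixP => i j; rewrite mul_mx_diag mul_diag_mx !mxE.
    have E := mul_bin_diag (b i) (a' j).
    rewrite /a' prednK // in E.
    have Ea : ((a j)%:R : rat) != 0 by rewrite pnatr_eq0 -lt0n.
    apply: (mulIf Ea); rewrite divfK // -!natrM mulnC -E.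
    by rewrite /b' /a'.
  rewrite !det_mulmx !det_diag.
  have Hp1 : (0 < \prod_i (\row_i ((b i)%:R : rat)) 0 i)%R.
    by apply: prodr_gt0 => i _; rewrite mxE ltr0n.
  have Hp2 : (0 < \prod_j (\row_j (((a j)%:R : rat)^-1)) 0 j)%R.
    by apply: prodr_gt0 => i _; rewrite mxE invr_gt0 ltr0n.
  have Ha' : strict_incr_nat a'.
    by move=> i j Hij; rewrite /a'; have := Ha _ _ Hij; have := Hapos i; lia.
  have Hb' : strict_incr_nat b'.
    by move=> i j Hij; rewrite /b'; have := Hb _ _ Hij; have := Hbpos i; lia.
  have Ha0' : a' ord0 = k by rewrite /a' Ha0.
  have [H1 H2] := IHk a' b' Ha0' Ha' Hb'.
  split.
    by apply: mulr_ge0; [apply: mulr_ge0 => //; exact: ltW | exact: ltW].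
  move=> Hc; apply: mulr_gt0 => //; apply: mulr_gt0 => //; apply: H2 => i.
  by rewrite /a' /b'; have := Hc i; lia.
Qed.

Lemma sumE1 n (x : 'I_n) (Fn : 'I_n -> rat) : \sum_i ((x == i)%:R * Fn i) = Fn x.
Proof.
rewrite (bigD1 x) //= eqxx mul1r big1 ?addr0 // => i Hi.
by rewrite eq_sym (negbTE Hi) mul0r.
Qed.

Lemma incr_inj k l (a : 'I_k -> 'I_l) : strict_incr_ord a -> injective a.
Proof.
move=> Ha i j E; case: (ltngtP i j) => H; [have := Ha _ _ H | have := Ha _ _ H | exact: val_inj];
  by rewrite E ltnn.
Qed.

Theorem corollary1 (m n p : nat) (r : 'I_m.+1 -> nat) (c : 'I_n.+1 -> nat)
  (alpha : 'I_p.+1 -> 'I_m.+1) (beta : 'I_p.+1 -> 'I_n.+1) :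
  strict_incr_nat r -> strict_incr_nat c ->
  ordered_subpair r c alpha beta ->
  (\rank (pascal_sub (fun i => r (alpha i)) (fun j => c (beta j)))
     = \rank (subpair_indicator alpha beta)
   /\ \rank (subpair_indicator alpha beta) = p.+1)
  /\ (maximal_subpair r c alpha beta ->
      \rank (pascal_sub r c) = \rank (subpair_indicator alpha beta)).
Proof.
move=> Hr Hc Hsub; have [Ha [Hb Hrc]] := Hsub.
have ainj := incr_inj Ha; have binj := incr_inj Hb.
set Ind := subpair_indicator alpha beta.
have HInd : \rank Ind = p.+1.
  set A : 'M[rat]_(p.+1, m.+1) := \matrix_(t, i) ((alpha t == i)%:R).
  set B : 'M[rat]_(p.+1, n.+1) := \matrix_(t, j) ((beta t == j)%:R).
  apply/eqP; rewrite eqn_leq; apply/andP; split.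
  - have -> : Ind = A^T *m B.
      apply/matrixP => i j; rewrite !mxE.
      case: existsP => [[t /andP [/eqP Hi /eqP Hj]] | Hn].
        rewrite (bigD1 t) //= !mxE Hi Hj !eqxx mul1r big1 ?addr0 // => u Hu; rewrite !mxE.
        rewrite -Hi (_ : (alpha u == alpha t) = false) ?mul0r //; apply/negbTE.
        by apply: contra Hu => /eqP E; apply/eqP; exact: ainj.
      rewrite big1 // => t _; rewrite !mxE.
      case: (eqVneq (alpha t) i) => Hi; last by rewrite mul0r.
      case: (eqVneq (beta t) j) => Hj; last by rewrite mulr0.
      by exfalso; apply: Hn; exists t; rewrite Hi Hj !eqxx.
    exact: leq_trans (mxrankM_maxr _ _) (rank_leq_row _).
  - have H1 : A *m Ind *m B^T = 1%:M.
      apply/matrixP => s t; rewrite mxE.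
      have HAI : forall j, (A *m Ind) s j = Ind (alpha s) j.
        move=> j; rewrite mxE -[RHS](sumE1 (alpha s) (fun i => Ind i j)).
        by apply: eq_bigr => i _; rewrite mxE.
      under eq_bigr => j _ do rewrite HAI [B^T _ _]mxE [B _ _]mxE mulrC.
      rewrite (sumE1 (beta t) (fun j => Ind (alpha s) j)) !mxE.
      case: existsP => [[u /andP [/eqP Hi /eqP Hj]] | Hn].
        by rewrite (ainj _ _ Hi) in Hj; rewrite (binj _ _ Hj) eqxx.
      case: (eqVneq s t) => // Hst; subst t.
      by exfalso; apply: Hn; exists s; rewrite !eqxx.
    rewrite -{1}(mxrank1 rat p.+1) -H1.
    exact: leq_trans (mxrankM_maxl _ _) (mxrankM_maxr _ _).
have Hdet : 0 < \det (PM (fun i => r (alpha i)) (fun j => c (beta j))).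
  have Ha1 : strict_incr_nat (fun i => r (alpha i)) by move=> i j Hij; apply: Hr; apply: Ha.
  have Hb1 : strict_incr_nat (fun j => c (beta j)) by move=> i j Hij; apply: Hc; apply: Hb.
  have [_ H2] := @P_all p.+1 _ _ Ha1 Hb1.
  exact: H2.
have Hphat : \rank (pascal_sub (fun i => r (alpha i)) (fun j => c (beta j))) = p.+1.
  have -> : pascal_sub (fun i => r (alpha i)) (fun j => c (beta j))
      = (PM (fun i => r (alpha i)) (fun j => c (beta j)))^T.
    by apply/matrixP => i j; rewrite !mxE.
  rewrite mxrank_tr mxrank_unit // unitmxE unitfE.
  by move: Hdet; rewrite lt0r => /andP [].
split; first by rewrite Hphat HInd.
move=> [_ Hmax]; rewrite HInd.
set A := pascal_sub r c.
apply/eqP; rewrite eqn_leq; apply/andP; split; last first.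
  rewrite -Hphat.
  have E1 : pascal_sub (fun i => r (alpha i)) (fun j => c (beta j)) = rowsub alpha (colsub beta A).
    by apply/matrixP => i j; rewrite !mxE.
  rewrite E1 rowsubE; apply: leq_trans (mxrankM_maxr _ _) _.
  have E2 : colsub beta A = (rowsub beta A^T)^T by apply/matrixP => i j; rewrite !mxE.
  rewrite E2 mxrank_tr rowsubE; apply: leq_trans (mxrankM_maxr _ _) _.
  by rewrite mxrank_tr.
set s := \rank A.
set f := maxrankfun A.
set B := rowsub f A.
have HBf : row_free B := maxrowsub_free A.
have Hfull : row_full B^T by rewrite /row_full mxrank_tr; exact: HBf.
set g := fullrankfun Hfull.
set C := rowsub g B^T.
have HC : C \in unitmx := fullrowsub_unit Hfull.
have Hd : \det C != 0 by rewrite -unitfE -unitmxE.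
have [sg Hsg] : exists sg : 'S_s, \prod_i C i (sg i) != 0.
  apply/existsP; apply: contraR Hd => /existsPn Hn; apply/eqP.
  rewrite /determinant big1 // => tau _; rewrite (eqP (negPn (Hn tau))) mulr0.
  done.
have Hent : forall i, (r (f (sg i)) <= c (g i))%N.
  move=> i; move/prodf_neq0: Hsg => /(_ i isT).
  by rewrite !mxE pnatr_eq0 -lt0n bin_gt0.
have Finj : injective (fun i => f (sg i)).
  by move=> i j /maxrankfun_inj /perm_inj.
have Ginj : injective g := @fullrankfun_inj _ _ _ _ Hfull.
have [a' [b' Hsub']] := sort_match Hr Hc Finj Ginj Hent.
exact: Hmax _ _ _ Hsub'.
Qed.
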